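(* Let $m$ be even, $1\le r\le m$, and let $f\colon\mathbb{F}_2^m=\mathbb{F}_2^{m-r}\times\mathbb{F}_2^r\to\mathbb{F}_2$ be a bent function. For $\lambda\in\mathbb{F}_2^r$ define $f_\lambda\colon\mathbb{F}_2^{m-r}\to\mathbb{F}_2$ by $f_\lambda(t)=f(t,\lambda)$. Then every Walsh coefficient of $f_\lambda$ lies in the set $W_r=\{2^{m/2}-i\cdot 2^{m/2-r+1} : 0\le i\le 2^r\}$.
   Context: The Walsh coefficient of a Boolean function $g\colon\mathbb{F}_2^n\to\mathbb{F}_2$ at $a\in\mathbb{F}_2^n$ is $\widehat g(a)=\sum_{x\in\mathbb{F}_2^n}(-1)^{g(x)+a\cdot x}$, where $a\cdot x$ is the standard inner product. For $m$ even, $f\colon\mathbb{F}_2^m\to\mathbb{F}_2$ is bent if $\widehat f(a)\in\{\pm 2^{m/2}\}$ for all $a\in\mathbb{F}_2^m$ (equivalently, for all nonzero $a$ and all $b$, $f(x+a)+f(x)=b$ has $2^{m-1}$ solutions). *)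

(* Defs.v *)
From mathcomp Require Import all_boot all_order all_algebra.
Set Implicit Arguments. Unset Strict Implicit. Unset Printing Implicit Defensive.
Import GRing.Theory Num.Theory.
Local Open Scope ring_scope.

Definition dotF2 (n : nat) (a x : 'rV['F_2]_n) : 'F_2 := \sum_(i < n) a 0 i * x 0 i.

Definition sgnF2 (b : 'F_2) : int := (-1) ^+ (nat_of_ord b).

Definition walsh (n : nat) (g : 'rV['F_2]_n -> 'F_2) (a : 'rV['F_2]_n) : int :=
  \sum_(x : 'rV['F_2]_n) sgnF2 (g x + dotF2 a x).

Definition bent (m : nat) (f : 'rV['F_2]_m -> 'F_2) : Prop :=
  ~~ odd m /\
  forall a : 'rV['F_2]_m,
    walsh f a = (2 ^ (m %/ 2))%:Z \/ walsh f a = - (2 ^ (m %/ 2))%:Z.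

(* W_r = { 2^(m/2) - i * 2^(m/2 - r + 1) : 0 <= i <= 2^r }, stated as a predicate
   on integers; 2^(m/2 - r + 1) is taken as a rational (it may be fractional). *)
Definition in_W (m r : nat) (w : int) : Prop :=
  exists i : nat, (i <= 2 ^ r)%N /\
    (w%:~R : rat) = (2 ^ (m %/ 2))%:R - i%:R * (2%:R ^ (m %/ 2)%N / 2%:R ^ r * 2%:R).

(* Main.v *)
Require Import Defs.
From mathcomp Require Import all_boot all_order all_algebra zify ring.
Set Implicit Arguments. Unset Strict Implicit. Unset Printing Implicit Defensive.
Import GRing.Theory Num.Theory.
Local Open Scope ring_scope.

Lemma F2cases (x : 'F_2) : x = 0 \/ x = 1.
Proof. case: x => [[|[|k]] Hk]; [left|right|]; try (by apply/eqP); by []. Qed.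

Lemma sgnF2D (a b : 'F_2) : sgnF2 (a + b) = sgnF2 a * sgnF2 b.
Proof. by case: (F2cases a) => ->; case: (F2cases b) => ->. Qed.

Lemma sgnF2sq (a : 'F_2) : sgnF2 a * sgnF2 a = 1.
Proof. by case: (F2cases a) => ->. Qed.

Lemma sgnF2neq (a b : 'F_2) : a != b -> sgnF2 a * sgnF2 b = -1.
Proof. by case: (F2cases a) => ->; case: (F2cases b) => ->. Qed.

Lemma dotDl k (x y c : 'rV['F_2]_k) : dotF2 (x + y) c = dotF2 x c + dotF2 y c.
Proof. by rewrite /dotF2 -big_split; apply eq_bigr => j _; rewrite mxE mulrDl. Qed.

Lemma dot_delta k (i : 'I_k) (c : 'rV['F_2]_k) : dotF2 (delta_mx 0 i) c = c 0 i.
Proof.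
rewrite /dotF2 (bigD1 i) //= big1 ?addr0 ?mxE ?eqxx ?mul1r // => j /negbTE ji.
by rewrite mxE ji andbF mul0r.
Qed.

Lemma dot_row_mx n r (a t : 'rV['F_2]_n) (mu l : 'rV['F_2]_r) :
  dotF2 (row_mx a mu) (row_mx t l) = dotF2 a t + dotF2 mu l.
Proof.
rewrite /dotF2 big_split_ord /=; congr (_ + _); apply eq_bigr => j _;
by rewrite ?row_mxEl ?row_mxEr.
Qed.

Lemma big_split_rV n r (F : 'rV['F_2]_(n + r) -> int) :
  \sum_x F x = \sum_t \sum_l F (row_mx t l).
Proof.
rewrite pair_big /= (reindex (fun p : 'rV['F_2]_n * 'rV['F_2]_r => row_mx p.1 p.2)) //=.
exists (fun x => (lsubmx x, rsubmx x)) => [[t l] _|x _] /=.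
  by rewrite row_mxKl row_mxKr.
by rewrite hsubmxK.
Qed.

Lemma card_rV r : #|{: 'rV['F_2]_r}| = (2 ^ r)%N.
Proof. by rewrite card_mx card_Fp // mul1n. Qed.

Lemma orth r (l1 l2 : 'rV['F_2]_r) :
  \sum_mu sgnF2 (dotF2 mu l1) * sgnF2 (dotF2 mu l2) = if l1 == l2 then (2 ^ r)%:Z else 0.
Proof.
case: eqP => [<-|/eqP ne].
  rewrite (eq_bigr (fun _ => 1)); last by move=> mu _; rewrite sgnF2sq.
  rewrite sumr_const card_rV.
  by rewrite natz.
have [i Hi] : exists i, l1 0 i != l2 0 i.
  case: (pickP (fun i => l1 0 i != l2 0 i)) => [i Hi|H]; first by exists i.
  case/eqP: ne; apply/matrixP => p q; rewrite ord1; apply/eqP.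
  by move: (H q) => /= /negbFE.
set S := \sum_mu _.
have HS : S = - S.
  rewrite /S [LHS](reindex_inj (addIr (delta_mx 0 i))) /= -sumrN.
  apply eq_bigr => mu _.
  rewrite !dotDl !sgnF2D.
  have hd : forall c : 'rV['F_2]_r, dotF2 (delta_mx 0 i) c = c 0 i.
    by move=> c; rewrite dot_delta.
  rewrite !hd.
  have := sgnF2neq Hi.
  move=> h.
  transitivity (sgnF2 (dotF2 mu l1) * sgnF2 (dotF2 mu l2) * (sgnF2 (l1 0 i) * sgnF2 (l2 0 i))); first ring.
  by rewrite h mulrN1.
lia.
Qed.

Lemma zn (n : nat) : ((n%:Z)%:~R : rat) = n%:R.
Proof. by []. Qed.

Lemma pick_one (I : finType) (lambda : I) (F : I -> int) c :
  \sum_l F l * (if lambda == l then c else 0) = F lambda * c.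
Proof.
rewrite (bigD1 lambda) //= eqxx big1 ?addr0 // => l /negbTE.
by rewrite eq_sym => ->; rewrite mulr0.
Qed.

Lemma key n r (f : 'rV['F_2]_(n + r) -> 'F_2) lambda a :
  \sum_mu sgnF2 (dotF2 mu lambda) * walsh f (row_mx a mu)
  = (2 ^ r)%:Z * walsh (fun t : 'rV['F_2]_n => f (row_mx t lambda)) a.
Proof.
have E : forall mu, walsh f (row_mx a mu) =
   \sum_t \sum_l sgnF2 (f (row_mx t l) + dotF2 a t) * sgnF2 (dotF2 mu l).
  move=> mu; rewrite /walsh big_split_rV; apply eq_bigr => t _.
  by apply eq_bigr => l _; rewrite dot_row_mx addrA [LHS]sgnF2D.
under eq_bigr => mu _ do rewrite E big_distrr.

rewrite exchange_big /=.
transitivity (\sum_t sgnF2 (f (row_mx t lambda) + dotF2 a t) * (2 ^ r)%:Z); last first.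
  by rewrite /walsh -mulr_suml mulrC.
apply eq_bigr => t _.
transitivity (\sum_l sgnF2 (f (row_mx t l) + dotF2 a t) * (if lambda == l then (2 ^ r)%:Z else 0)).
  under eq_bigr => mu _ do rewrite big_distrr.
  rewrite exchange_big /=; apply eq_bigr => l _.
  rewrite -(orth lambda l) big_distrr; by apply eq_bigr => mu _; rewrite /= mulrCA.
exact: pick_one.
Qed.

Theorem mainTheorem7 (n r : nat) (f : 'rV['F_2]_(n + r) -> 'F_2) :
  ~~ odd (n + r) -> (1 <= r)%N -> bent f ->
  forall (lambda : 'rV['F_2]_r) (a : 'rV['F_2]_n),
    in_W (n + r) r (walsh (fun t : 'rV['F_2]_n => f (row_mx t lambda)) a).
Proof.
move=> Hodd Hr [_ Hb] lambda a.
set h := ((n + r) %/ 2)%N.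
set W := walsh _ a.
pose e mu := sgnF2 (dotF2 mu lambda) * walsh f (row_mx a mu).
have s0 : sgnF2 0 = 1 by [].
have s1 : sgnF2 1 = -1 by [].
have He : forall mu, e mu = (2 ^ h)%:Z \/ e mu = - (2 ^ h)%:Z.
  move=> mu; rewrite /e; case: (F2cases (dotF2 mu lambda)) => ->;
  case: (Hb (row_mx a mu)) => ->; rewrite ?s0 ?s1 ?mul1r ?mulN1r ?opprK; auto.
pose k := (\sum_mu (e mu == - (2 ^ h)%:Z) : nat)%N.
have Hk : (k <= 2 ^ r)%N.
  rewrite -card_rV -sum1_card; apply leq_sum => mu _; by case: (_ == _).
have hp : (0 < 2 ^ h)%N by rewrite expn_gt0.
have hne : (2 ^ h)%:Z == - (2 ^ h)%:Z = false.
  by apply/negbTE; lia.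
have Hsum : (2 ^ r)%:Z * W = (2 ^ h * 2 ^ r)%:Z - (2 * 2 ^ h * k)%:Z.
  rewrite -key.
  transitivity (\sum_mu ((2 ^ h)%:Z - (2 * 2 ^ h)%:Z * (e mu == - (2 ^ h)%:Z)%:R)).
    apply eq_bigr => mu _; rewrite -/(e mu).
    case: (He mu) => ->; rewrite ?hne ?eqxx ?mulr0 ?subr0 //. lia.
  rewrite sumrB sumr_const card_rV -big_distrr -natr_sum -/k.
  by rewrite /= natz -mulr_natr natz -!PoszM.
exists k; split => //.
have : ((2 ^ r)%:Z * W)%:~R = ((2 ^ h * 2 ^ r)%:Z - (2 * 2 ^ h * k)%:Z)%:~R :> rat.
  by rewrite Hsum.
rewrite intrM intrB !zn !natrM !natrX => H.
rewrite -!exprnP -/h.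
have h2 : (2%:R ^+ r) != 0 :> rat by rewrite expf_eq0 pnatr_eq0 andbF.
move: H h2; set x := (2%:R ^+ h : rat); set y := (2%:R ^+ r : rat); set w := (W%:~R : rat).
move=> H h2.
apply: (mulfI h2). rewrite H. by field.
Qed.
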